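(* Let $K\ge 1$ and $T\ge 1$ be integers, let $\mathcal{K}=\{1,\dots,K\}$ and $\mathcal{T}=\{1,\dots,T\}$, and let prices $p_k(t)>0$ be given for all $k\in\mathcal{K}$, $t\in\mathcal{T}$. Write $S=\sum_{k\in\mathcal{K}}\sum_{t\in\mathcal{T}}p_k(t)$. Fix a user $n$ with parameters $\zeta_n>0$, budget $B_n\ge 0$ and minimum energy requirement $E_n^{\min}\ge 0$, and define $$d_{n,k}(t)=\frac{B_n+\zeta_n S}{KT\,p_k(t)}-\zeta_n,\qquad k\in\mathcal{K},\ t\in\mathcal{T}.$$ Then the demands $d_{n,k}(t)$ are feasible, i.e. they satisfy $d_{n,k}(t)\ge 0$ for all $k\in\mathcal{K}$, $t\in\mathcal{T}$, $\sum_{k\in\mathcal{K}}\sum_{t\in\mathcal{T}}p_k(t)d_{n,k}(t)\le B_n$, and $\sum_{k\in\mathcal{K}}\sum_{t\in\mathcal{T}}d_{n,k}(t)\ge E_n^{\min}$, if and only if $$B_n\ge \max\{f_{n,1},f_{n,2}\},$$ where $$f_{n,1}=\max_{k\in\mathcal{K},\,t\in\mathcal{T}}\zeta_n\bigl(KT\,p_k(t)-S\bigr),\qquad f_{n,2}=\frac{E_n^{\min}+\zeta_n KT}{\sum_{k\in\mathcal{K}}\sum_{t\in\mathcal{T}}\frac{1}{KT\,p_k(t)}}-\zeta_n S.$$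
   Context: This arises in a demand response model with $K$ utility companies announcing prices $p_k(t)$ over $T$ periods; user $n$ chooses demands $d_{n,k}(t)$ to maximize $\gamma_n\sum_{k}\sum_{t}\ln(\zeta_n+d_{n,k}(t))$ subject to the budget constraint $\sum_k\sum_t p_k(t)d_{n,k}(t)\le B_n$, the minimum energy constraint $\sum_k\sum_t d_{n,k}(t)\ge E_n^{\min}$, and nonnegativity $d_{n,k}(t)\ge 0$; the displayed $d_{n,k}(t)$ is the maximizer obtained when the minimum energy constraint is ignored. *)

(* Defs.v *)
From mathcomp Require Import all_boot all_order all_algebra.
Set Implicit Arguments. Unset Strict Implicit. Unset Printing Implicit Defensive.
Import Order.TTheory GRing.Theory Num.Theory.
Local Open Scope ring_scope.

(* Numbers of companies K = K'.+1 >= 1 and periods T = T'.+1 >= 1;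
   indices k : 'I_K'.+1, t : 'I_T'.+1 (0-based). *)
Section Defs.
Variables (R : realFieldType) (K' T' : nat).
Local Notation K := K'.+1.
Local Notation T := T'.+1.
Variable p : 'I_K -> 'I_T -> R.

Definition Ssum : R := \sum_(k < K) \sum_(t < T) p k t.

Definition KT : R := (K * T)%:R.

Definition demand (zeta B : R) (k : 'I_K) (t : 'I_T) : R :=
  (B + zeta * Ssum) / (KT * p k t) - zeta.

Definition feasible (zeta B Emin : R) : Prop :=
  [/\ (forall k t, 0 <= demand zeta B k t),
      \sum_(k < K) \sum_(t < T) p k t * demand zeta B k t <= B &
      Emin <= \sum_(k < K) \sum_(t < T) demand zeta B k t].

(* max over the nonempty index set, seeded with the (0,0) term *)
Definition f1 (zeta : R) : R :=
  \big[Num.max/zeta * (KT * p ord0 ord0 - Ssum)]_(k < K)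
    \big[Num.max/zeta * (KT * p ord0 ord0 - Ssum)]_(t < T)
       (zeta * (KT * p k t - Ssum)).

Definition f2 (zeta Emin : R) : R :=
  (Emin + zeta * KT) / (\sum_(k < K) \sum_(t < T) (KT * p k t)^-1)
  - zeta * Ssum.
End Defs.

(* Main.v *)
Require Import Defs.
From mathcomp Require Import all_boot all_order all_algebra.
From mathcomp Require Import ring lra.
Import Order.TTheory GRing.Theory Num.Theory.
Local Open Scope ring_scope.

Lemma bmax_le (R : realFieldType) (n : nat) (F : 'I_n -> R) x0 B :
  (\big[Num.max/x0]_(i < n) F i <= B) <-> (x0 <= B /\ forall i, F i <= B).
Proof.
elim: n F => [|n IH] F.
  rewrite big_ord0; split => [h|[]//]; split => // [[]] //.
rewrite big_ord_recl /= ge_max; split.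
  move=> /andP[h3 /IH[h1 h2]]; split => // i.
  by case: (unliftP ord0 i) => [j ->|->].
by move=> [h1 h2]; apply/andP; split => //; apply/IH; split.
Qed.

Lemma sum_gt0 (R : realFieldType) n (F : 'I_n.+1 -> R) :
  (forall i, 0 < F i) -> 0 < \sum_i F i.
Proof.
move=> h; rewrite big_ord_recl; apply: (lt_le_trans (h ord0)).
by rewrite lerDl; apply: sumr_ge0 => i _; exact: ltW.
Qed.

Theorem theorem1 (R : realFieldType) (K' T' : nat)
  (p : 'I_K'.+1 -> 'I_T'.+1 -> R) (zeta B Emin : R) :
  (forall k t, 0 < p k t) -> 0 < zeta -> 0 <= B -> 0 <= Emin ->
  feasible p zeta B Emin <-> Num.max (f1 p zeta) (f2 p zeta Emin) <= B.
Proof.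
move=> hp hz hB hE.
set S := Ssum p.
have hKT : 0 < KT R K' T' by rewrite /KT ltr0n muln_gt0.
set A := B + zeta * S.
have hsp : \sum_(k < K'.+1) \sum_(t < T'.+1) p k t * demand p zeta B k t = B.
  have e : forall k t, p k t * demand p zeta B k t = A / KT R K' T' - zeta * p k t.
    move=> k t; rewrite /demand -/S -/A; have := hp k t; have := hKT.
    move=> h1 h2; field; have := ler0n R K'; have := ler0n R T'; move=> hT hK; apply/and3P; split; apply/negP => /eqP h; lra.
  rewrite (eq_bigr (fun k => \sum_(t < T'.+1) (A / KT R K' T' - zeta * p k t))); last first.
    by move=> k _; apply: eq_bigr => t _; rewrite e.
  under eq_bigr => k _ do rewrite big_split /= sumr_const card_ord sumrN.
  rewrite big_split /= sumr_const card_ord sumrN.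
  rewrite -mulrnA -mulr_natr mulnC.
  have -> : (K'.+1 * T'.+1)%:R = KT R K' T' by [].
  rewrite mulfVK ?gt_eqF //.
  under eq_bigr => k _ do rewrite -mulr_sumr.
  rewrite -mulr_sumr -/(Ssum p) -/S /A; ring.
set I := \sum_(k < K'.+1) \sum_(t < T'.+1) (KT R K' T' * p k t)^-1.
have hI : 0 < I.
  apply: sum_gt0 => k; apply: sum_gt0 => t; by rewrite invr_gt0 mulr_gt0.
have hsd : \sum_(k < K'.+1) \sum_(t < T'.+1) demand p zeta B k t = A * I - zeta * KT R K' T'.
  rewrite /demand -/S -/A.
  under eq_bigr => k _ do rewrite big_split /= sumr_const card_ord.
  rewrite big_split /= sumr_const card_ord /I mulr_sumr.
  under [in RHS]eq_bigr => k _ do rewrite mulr_sumr.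
  rewrite -mulrnA -mulr_natr mulnC.
  have -> : (K'.+1 * T'.+1)%:R = KT R K' T' by [].
  by rewrite mulNr.
have hnn : forall k t, (0 <= demand p zeta B k t) = (zeta * (KT R K' T' * p k t - S) <= B).
  move=> k t; rewrite /demand -/S -/A subr_ge0 ler_pdivlMr ?mulr_gt0 //.
  by rewrite /A mulrBr lerBlDr.
have he : (Emin <= A * I - zeta * KT R K' T') = (f2 p zeta Emin <= B).
  rewrite /f2 -/S -/I lerBrDr [in RHS]lerBlDr ler_pdivrMr //.
rewrite ge_max /f1; split.
  case => h1 h2 h3; apply/andP; split; last by rewrite -he -hsd.
  apply/bmax_le; split; first by rewrite -hnn.
  by move=> k; apply/bmax_le; split => [|t]; rewrite -hnn.
move=> /andP[/bmax_le[_ h1] h2]; split.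
- by move=> k t; rewrite hnn; have /bmax_le[_ ->] := h1 k.
- by rewrite hsp.
- by rewrite hsd he.
Qed.
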